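(* A skew lattice $S$ is a left distributive solution of the Yang–Baxter equation if and only if it satisfies the identity \[ ((y\vee x)\wedge z)\vee(x\wedge y)=((y\wedge z)\vee x)\wedge(z\vee y)\quad\text{for all }x,y,z\in S. \] In particular, left distributive solutions form a variety of skew lattices.
   Context: A skew lattice is a set $S$ with two binary operations $\wedge,\vee$, each idempotent and associative, satisfying the absorption laws $x\wedge(x\vee y)=x=x\vee(x\wedge y)$ and $(x\wedge y)\vee y=y=(x\vee y)\wedge y$ for all $x,y\in S$. $S$ is a left distributive solution if $r_L:S\times S\to S\times S$, $r_L(x,y)=(x\wedge y,y\vee x)$, satisfies $(r_L\times\mathrm{id})\circ(\mathrm{id}\times r_L)\circ(r_L\times\mathrm{id})=(\mathrm{id}\times r_L)\circ(r_L\times\mathrm{id})\circ(\mathrm{id}\times r_L)$. *)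

(* Defs.v *)
Definition is_skew_lattice {S : Type} (meet join : S -> S -> S) : Prop :=
  (forall x, meet x x = x) /\ (forall x, join x x = x) /\
  (forall x y z, meet x (meet y z) = meet (meet x y) z) /\
  (forall x y z, join x (join y z) = join (join x y) z) /\
  (forall x y, meet x (join x y) = x) /\
  (forall x y, join x (meet x y) = x) /\
  (forall x y, join (meet x y) y = y) /\
  (forall x y, meet (join x y) y = y).

Definition rL {S : Type} (meet join : S -> S -> S) (p : S * S) : S * S :=
  (meet (fst p) (snd p), join (snd p) (fst p)).

Definition r12 {S : Type} (r : S * S -> S * S) (t : S * S * S) : S * S * S :=
  let '(x, y, z) := t in let '(a, b) := r (x, y) in (a, b, z).

Definition r23 {S : Type} (r : S * S -> S * S) (t : S * S * S) : S * S * S :=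
  let '(x, y, z) := t in let '(b, c) := r (y, z) in (x, b, c).

Definition is_YBE_solution {S : Type} (r : S * S -> S * S) : Prop :=
  forall t : S * S * S, r12 r (r23 r (r12 r t)) = r23 r (r12 r (r23 r t)).

Definition left_distributive_solution {S : Type} (meet join : S -> S -> S) : Prop :=
  is_YBE_solution (rL meet join).

(* Main.v *)
Require Import Defs.

Theorem mainTheorem10 (S : Type) (meet join : S -> S -> S)
  (HS : is_skew_lattice meet join) :
  left_distributive_solution meet join <->
  (forall x y z : S,
     join (meet (join y x) z) (meet x y) = meet (join (meet y z) x) (join z y)).
Proof.
  destruct HS as [mi [ji [ma [ja [a1 [a2 [a3 a4]]]]]]].
  unfold left_distributive_solution, is_YBE_solution, r12, r23, rL; simpl.
  split.
  - intros H x y z. specialize (H (x, y, z)). simpl in H.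
    injection H. intros _ H2 _. exact H2.
  - intros H [[x y] z]. simpl.
    rewrite H.
    assert (E1 : meet (meet x y) (meet (join y x) z) = meet x (meet y z)).
    { rewrite <- ma. rewrite (ma y (join y x) z). rewrite a1. reflexivity. }
    assert (E3 : join z (join y x) = join (join z y) (join (meet y z) x)).
    { rewrite (ja (join z y) (meet y z) x). rewrite <- (ja z y (meet y z)).
      rewrite a2. rewrite ja. reflexivity. }
    rewrite E1, E3. reflexivity.
Qed.
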